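(* Let $\mathcal C$ be a covariantly finite subcategory of the category of all finitely presented right $R$-modules, and let $T$ be a module in $\varinjlim\mathcal C$. Assume that for every direct system $(C_n,c_{mn}\mid n\le m<\omega)$ of modules from $\mathcal C$ indexed by $\omega$, the inverse system $(\mathrm{Hom}_R(C_n,T),\mathrm{Hom}_R(c_{mn},T))_{n<\omega}$ is Mittag-Leffler. Then $T$ is $\Sigma$-pure-injective.
   Context: $\mathcal C$ covariantly finite in the category of finitely presented modules means every finitely presented module $F$ admits a map $p:F\to C$ with $C\in\mathcal C$ through which every map from $F$ to a module of $\mathcal C$ factors. $\varinjlim\mathcal C$ is the class of all direct limits of direct systems of modules from $\mathcal C$. An inverse system $(H_n,h_{nm})$ is Mittag-Leffler if for each $n$ there is $m\ge n$ with $\mathrm{Im}(h_{nk})=\mathrm{Im}(h_{nm})$ for all $k\ge m$. $T$ is $\Sigma$-pure-injective if every direct sum of copies of $T$ is pure-injective. *)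

(* Defs.v *)
(* Right R-modules are modelled as left modules over the
   converse ring R^c : for x in M and r in R, the right action x.r is r *: x. *)
From HB Require Import structures.
From mathcomp Require Import all_boot all_order all_algebra.
Set Implicit Arguments. Unset Strict Implicit. Unset Printing Implicit Defensive.
Import GRing.Theory.
Local Open Scope ring_scope.

Section ModuleTheory.
Variable R : nzRingType.

Notation rmod := (lmodType R^c).

Definition fin_presented (M : rmod) : Prop :=
  exists (m n : nat) (g : {linear 'rV[R^c]_m -> 'rV[R^c]_n})
         (p : {linear 'rV[R^c]_n -> M}),
    (forall y : M, exists v, p v = y) /\
    (forall v, p v = 0 <-> exists u, v = g u).

Definition direct_system (I : Type) (le : I -> I -> Prop)
  (M : I -> rmod) (f : forall i j, le i j -> {linear M i -> M j}) : Prop :=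
  (forall i (h : le i i) x, f i i h x = x) /\
  (forall i j k (h1 : le i j) (h2 : le j k) (h3 : le i k) x,
      f j k h2 (f i j h1 x) = f i k h3 x).

Definition directed (I : Type) (le : I -> I -> Prop) : Prop :=
  (exists i : I, True) /\
  (forall i, le i i) /\
  (forall i j k, le i j -> le j k -> le i k) /\
  (forall i j, exists k, le i k /\ le j k).

Definition is_direct_limit (I : Type) (le : I -> I -> Prop)
  (M : I -> rmod) (f : forall i j, le i j -> {linear M i -> M j})
  (L : rmod) (g : forall i, {linear M i -> L}) : Prop :=
  (forall i j (h : le i j) x, g j (f i j h x) = g i x) /\
  (forall (N : rmod) (q : forall i, {linear M i -> N}),
     (forall i j (h : le i j) x, q j (f i j h x) = q i x) ->
     (exists u : {linear L -> N}, forall i x, u (g i x) = q i x) /\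
     (forall u v : {linear L -> N},
        (forall i x, u (g i x) = q i x) -> (forall i x, v (g i x) = q i x) ->
        forall y, u y = v y)).

Definition in_varinjlim (C : rmod -> Prop) (T : rmod) : Prop :=
  exists (I : Type) (le : I -> I -> Prop) (M : I -> rmod)
         (f : forall i j, le i j -> {linear M i -> M j})
         (g : forall i, {linear M i -> T}),
    directed le /\ (forall i, C (M i)) /\ direct_system f /\ is_direct_limit f g.

Definition cov_finite_in_fp (C : rmod -> Prop) : Prop :=
  (forall M, C M -> fin_presented M) /\
  (forall F : rmod, fin_presented F ->
     exists (C0 : rmod) (p : {linear F -> C0}), C C0 /\
       forall (C1 : rmod) (k : {linear F -> C1}), C C1 ->
         exists t : {linear C0 -> C1}, forall x, t (p x) = k x).

(* The inverse system (Hom(C_n,T), Hom(c_mn,T)) is Mittag-Leffler: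
   for each n there is m >= n with Im h_nk = Im h_nm for all k >= m,
   where h_nk : Hom(C_k,T) -> Hom(C_n,T), phi |-> phi o c_nk. *)
Definition hom_ML (Cs : nat -> rmod)
  (c : forall n m, (n <= m)%N -> {linear Cs n -> Cs m}) (T : rmod) : Prop :=
  forall n, exists m (hnm : (n <= m)%N), forall k (hnk : (n <= k)%N), (m <= k)%N ->
    forall psi : {linear Cs n -> T},
      (exists phi : {linear Cs k -> T}, forall x, psi x = phi (c n k hnk x)) <->
      (exists phi : {linear Cs m -> T}, forall x, psi x = phi (c n m hnm x)).

Definition pure_mono (A B : rmod) (f : {linear A -> B}) : Prop :=
  injective f /\
  forall (n m : nat) (r : 'I_n -> 'I_m -> R^c) (a : 'I_m -> A),
    (exists x : 'I_n -> B, forall i, \sum_(j < n) r j i *: x j = f (a i)) ->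
    exists y : 'I_n -> A, forall i, \sum_(j < n) r j i *: y j = a i.

Definition pure_injective (M : rmod) : Prop :=
  forall (A B : rmod) (f : {linear A -> B}), pure_mono f ->
    forall g : {linear A -> M}, exists h : {linear B -> M}, forall a, h (f a) = g a.

Definition is_direct_sum_of_copies (T M : rmod) : Prop :=
  exists (I : Type) (iota : I -> {linear T -> M}),
    forall (N : rmod) (q : I -> {linear T -> N}),
      (exists u : {linear M -> N}, forall i x, u (iota i x) = q i x) /\
      (forall u v : {linear M -> N},
         (forall i x, u (iota i x) = v (iota i x)) -> forall y, u y = v y).

Definition sigma_pure_injective (T : rmod) : Prop :=
  forall M : rmod, is_direct_sum_of_copies T M -> pure_injective M.

End ModuleTheory.

(* Main.v *)
Require Import Defs.
From HB Require Import structures.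
From mathcomp Require Import all_boot all_order all_algebra.
From mathcomp Require Import boolp generic_quotient.
From mathcomp Require classical_sets.
Set Implicit Arguments. Unset Strict Implicit. Unset Printing Implicit Defensive.
Import GRing.Theory.
Local Open Scope ring_scope.

Definition submod (K : pzRingType) (V : lmodType K) (S : V -> Prop) :=
  S 0 /\ (forall x y, S x -> S y -> S (x - y)) /\ (forall a x, S x -> S (a *: x)).

Module QM.
Section Q.
Local Open Scope quotient_scope.
Variables (K : pzRingType) (V : lmodType K) (S : V -> Prop).
Hypothesis Sok : submod S.
Let S0 : S 0. Proof. by case: Sok. Qed.
Let SB : forall x y, S x -> S y -> S (x - y). Proof. by case: Sok => _ []. Qed.
Let SZ : forall a x, S x -> S (a *: x). Proof. by case: Sok => _ []. Qed.

Definition equiv (x y : V) := `[< S (x - y) >].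

Lemma equiv_is_equiv : equiv_class_of equiv.
Proof.
split=> [x|x y|y x z]; rewrite /equiv.
- by apply/asboolP; rewrite subrr.
- apply/asboolP/asboolP => H.
  + by rewrite -opprB -sub0r; apply: SB.
  + by rewrite -opprB -sub0r; apply: SB.
- move=> /asboolP H1 /asboolP H2; apply/asboolP.
  have -> : x - z = (x - y) - (0 - (y - z)) by rewrite sub0r opprK addrA subrK.
  by apply: SB => //; apply: SB.
Qed.

Canonical equiv_equiv := EquivRelPack equiv_is_equiv.
Canonical equiv_encModRel := defaultEncModRel equiv.

Definition quot := {eq_quot equiv}.
HB.instance Definition _ : EqQuotient V equiv quot := EqQuotient.on quot.
HB.instance Definition _ := Choice.on quot.

Lemma eqmodE x y : (x == y %[mod quot]) = `[< S (x - y) >].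
Proof. by rewrite piE. Qed.

Definition zero : quot := \pi_quot 0.
Definition add := locked (fun (a b : quot) => \pi_quot (repr a + repr b) : quot).
Definition opp := locked (fun (a : quot) => \pi_quot (- repr a) : quot).
Definition scl := locked (fun (k : K) (a : quot) => \pi_quot (k *: repr a) : quot).

Lemma SN x : S x -> S (- x).
Proof. by move=> H; rewrite -sub0r; apply: SB. Qed.
Lemma SD x y : S x -> S y -> S (x + y).
Proof. by move=> H1 H2; rewrite -[y]opprK; apply: SB => //; apply: SN. Qed.

Lemma reprP x : S (x - repr (\pi_quot x)).
Proof. by rewrite -opprB; apply: SN; apply/asboolP; rewrite -eqmodE reprK. Qed.

Lemma pi_eq x y : S (x - y) -> \pi_quot x = \pi_quot y.
Proof. by move=> H; apply/eqP; rewrite eqmodE; apply/asboolP. Qed.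

Lemma pi_add x y : \pi_quot (x + y) = add (\pi x) (\pi y).
Proof. by unlock add; apply: pi_eq; rewrite opprD addrACA; apply: SD; apply: reprP. Qed.

Lemma pi_opp x : \pi_quot (- x) = opp (\pi x).
Proof. by unlock opp; apply: pi_eq; rewrite -opprD; apply: SN; apply: reprP. Qed.

Lemma pi_scl k x : \pi_quot (k *: x) = scl k (\pi x).
Proof. by unlock scl; apply: pi_eq; rewrite -scalerBr; apply: SZ; apply: reprP. Qed.

Lemma addqA : associative add.
Proof. by move=> x y z; elim/quotW: x => x; elim/quotW: y => y; elim/quotW: z => z; rewrite -!pi_add addrA. Qed.
Lemma addqC : commutative add.
Proof. by move=> x y; elim/quotW: x => x; elim/quotW: y => y; rewrite -!pi_add addrC. Qed.
Lemma add0q : left_id zero add.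
Proof. by move=> x; elim/quotW: x => x; rewrite /zero -!pi_add add0r. Qed.
Lemma addNq : left_inverse zero opp add.
Proof. by move=> x; elim/quotW: x => x; rewrite -pi_opp -pi_add addNr. Qed.

HB.instance Definition _ := GRing.isZmodule.Build quot addqA addqC add0q addNq.

Lemma sclA a b v : scl a (scl b v) = scl (a * b) v.
Proof. by elim/quotW: v => v; rewrite -!pi_scl scalerA. Qed.
Lemma scl1 : left_id 1 scl.
Proof. by move=> v; elim/quotW: v => v; rewrite -!pi_scl scale1r. Qed.
Lemma sclDr : right_distributive scl add.
Proof. by move=> a u v; elim/quotW: u => u; elim/quotW: v => v; rewrite -!(pi_scl, pi_add) scalerDr. Qed.
Lemma sclDl v : {morph scl^~ v : a b / a + b >-> add a b}.
Proof. by move=> a b; elim/quotW: v => v; rewrite -!(pi_scl, pi_add) scalerDl. Qed.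

HB.instance Definition _ := GRing.Zmodule_isLmodule.Build K quot sclA scl1 sclDr sclDl.

Definition piq (x : V) : quot := \pi_quot x.

Lemma piq_linear : linear piq.
Proof. by move=> a x y; rewrite /piq pi_add pi_scl. Qed.
HB.instance Definition _ := GRing.isLinear.Build K V quot _ piq piq_linear.

Lemma piq0 x : piq x = 0 <-> S x.
Proof.
split=> [H|H].
- have : x == 0 %[mod quot] by rewrite /piq in H; rewrite H.
  by rewrite eqmodE subr0 => /asboolP.
- by apply: pi_eq; rewrite subr0.
Qed.

Lemma piq_surj (q : quot) : exists x, piq x = q.
Proof. by exists (repr q); rewrite /piq reprK. Qed.

Lemma piq_lift (W : lmodType K) (h : {linear V -> W}) :
  (forall x, S x -> h x = 0) ->
  exists h' : {linear quot -> W}, forall x, h' (piq x) = h x.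
Proof.
move=> Hh.
have hE x y : S (x - y) -> h x = h y.
  by move=> H; apply/eqP; rewrite -subr_eq0 -linearB Hh.
pose f (q : quot) := h (repr q).
have fE x : f (piq x) = h x by apply: hE; rewrite -opprB; apply: SN; apply: reprP.
have fl : linear f.
  move=> a u v; rewrite -[u]reprK -[v]reprK.
  have -> : a *: \pi_quot (repr u) + \pi_quot (repr v) = piq (a *: repr u + repr v).
    by rewrite linearP.
  by rewrite fE linearP -!fE.
pose F := GRing.isLinear.Build K quot W _ f fl.
pose h' : {linear quot -> W} := HB.pack f F.
by exists h' => x; apply: fE.
Qed.

End Q.
End QM.
Import QM.

Fixpoint All {T} (P : T -> Prop) (l : seq T) : Prop :=
  match l with [::] => True | x :: l' => P x /\ All P l' end.

Lemma All_cat T (P : T -> Prop) l1 l2 : All P (l1 ++ l2) <-> All P l1 /\ All P l2.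
Proof. elim: l1 => [|x l IH] /=; [tauto|rewrite IH; tauto]. Qed.

Lemma All_impl T (P Q : T -> Prop) l : (forall x, P x -> Q x) -> All P l -> All Q l.
Proof. by move=> H; elim: l => [|x l IH] //= [/H ? /IH]. Qed.

Lemma All_map T U (f : T -> U) (P : U -> Prop) l : All P (map f l) <-> All (fun x => P (f x)) l.
Proof. elim: l => [|x l IH] /=; [tauto|rewrite IH; tauto]. Qed.

Lemma All_forall T (P : T -> Prop) l : (forall x, P x) -> All P l.
Proof. by move=> H; elim: l => //= x l ->; split. Qed.

Lemma All_mem (T : eqType) (P : T -> Prop) l : All P l <-> (forall x, x \in l -> P x).
Proof.
elim: l => [|y l IH] /=; first by split=> // _ x; rewrite in_nil.
rewrite IH; split=> [[Py H] x|H]; first by rewrite in_cons => /orP[/eqP->|/H].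
by split=> [|x xl]; apply: H; rewrite in_cons ?eqxx ?xl ?orbT.
Qed.

Section Sys.
Variable K : nzRingType.

Definition lhsv (X : Type) (V : lmodType K) (s : X -> V) (e : seq (X * K)) : V :=
  \sum_(p <- e) p.2 *: s p.1.

Lemma lhsv_lin X (V W : lmodType K) (h : {linear V -> W}) (s : X -> V) e :
  lhsv (fun x => h (s x)) e = h (lhsv s e).
Proof. by rewrite /lhsv linear_sum; apply: eq_bigr => p _; rewrite linearZ. Qed.

Lemma lhsvD X (V : lmodType K) (s1 s2 : X -> V) e :
  lhsv (fun x => s1 x + s2 x) e = lhsv s1 e + lhsv s2 e.
Proof. by rewrite /lhsv -big_split; apply: eq_bigr => p _; rewrite scalerDr. Qed.

Lemma lhsvN X (V : lmodType K) (s : X -> V) e :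
  lhsv (fun x => - s x) e = - lhsv s e.
Proof. by rewrite /lhsv -sumrN; apply: eq_bigr => p _; rewrite scalerN. Qed.

Lemma lhsvB X (V : lmodType K) (s1 s2 : X -> V) e :
  lhsv (fun x => s1 x - s2 x) e = lhsv s1 e - lhsv s2 e.
Proof. by rewrite lhsvD lhsvN. Qed.

Lemma lhsv0 X (V : lmodType K) e : lhsv (fun _ : X => (0 : V)) e = 0.
Proof. by rewrite /lhsv big1 // => p _; rewrite scaler0. Qed.

Lemma lhsv_ext X (V : lmodType K) (s s' : X -> V) e :
  All (fun p => s p.1 = s' p.1) e -> lhsv s e = lhsv s' e.
Proof.
elim: e => [|p e IH] /=; first by rewrite /lhsv !big_nil.
by case=> H1 /IH H2; rewrite /lhsv !big_cons -/(lhsv s e) -/(lhsv s' e) H1 H2.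
Qed.

Lemma lhsv_map X Y (V : lmodType K) (f : X -> Y) (s : Y -> V) e :
  lhsv s (map (fun p => (f p.1, p.2)) e) = lhsv (fun x => s (f x)) e.
Proof. by rewrite /lhsv big_map. Qed.

(* pp-sets with variables in nat, distinguished variable 0 *)
Definition ppset (V : lmodType K) (l : seq (seq (nat * K))) (m : V) : Prop :=
  exists s : nat -> V, All (fun e => lhsv s e = 0) l /\ s 0%N = m.

Lemma pp_lin (V W : lmodType K) (h : {linear V -> W}) l m :
  ppset l m -> ppset l (h m).
Proof.
case=> s [Hs <-]; exists (fun x => h (s x)); split=> //.
by apply: All_impl Hs => e He; rewrite lhsv_lin He linear0.
Qed.

Lemma pp0 (V : lmodType K) l : ppset l (0 : V).
Proof. by exists (fun _ => 0); split=> //; apply: All_forall => e; apply: lhsv0. Qed.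

Lemma ppD (V : lmodType K) l (m1 m2 : V) : ppset l m1 -> ppset l m2 -> ppset l (m1 + m2).
Proof.
case=> s1 [H1 <-] [s2 [H2 <-]]; exists (fun x => s1 x + s2 x); split=> //.
elim: l H1 H2 => //= e l IH [E1 H1] [E2 H2]; split; last exact: IH.
by rewrite lhsvD E1 E2 addr0.
Qed.

Lemma pp_sum (V : lmodType K) l (I : Type) (r : seq I) (F : I -> V) :
  (forall i, ppset l (F i)) -> ppset l (\sum_(i <- r) F i).
Proof.
move=> H; elim: r => [|i r IH]; first by rewrite big_nil; apply: pp0.
by rewrite big_cons; apply: ppD.
Qed.

Definition DCC (V : lmodType K) : Prop :=
  forall D : nat -> seq (seq (nat * K)),
    (forall n (m : V), ppset (D n.+1) m -> ppset (D n) m) ->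
    exists n, forall m : V, ppset (D n) m -> ppset (D n.+1) m.


Definition ren (X Y : Type) (f : X -> Y) (e : seq (X * K)) := map (fun p => (f p.1, p.2)) e.

Definition ppI (l1 l2 : seq (seq (nat * K))) : seq (seq (nat * K)) :=
  map (ren double) l1 ++ map (ren (fun v => (v.*2).+1)) l2 ++
  [:: [:: (0%N, 1); (1%N, -1)]].

Lemma ppI_iff (V : lmodType K) l1 l2 (m : V) :
  ppset (ppI l1 l2) m <-> ppset l1 m /\ ppset l2 m.
Proof.
split.
- case=> s [Hs Hm]; move: Hs; rewrite /ppI !All_cat !All_map => -[H1 [H2 [H3 _]]].
  move: H3; rewrite /lhsv !big_cons big_nil /= addr0 scale1r scaleN1r => /eqP.
  rewrite subr_eq0 => /eqP E.
  split.
  + exists (fun v => s v.*2); split=> //.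
    by apply: All_impl H1 => e; rewrite /ren lhsv_map.
  + exists (fun v => s (v.*2).+1); split=> /=; last by rewrite -E.
    by apply: All_impl H2 => e; rewrite /ren (lhsv_map (fun v => v.*2.+1)).
- case=> -[s1 [H1 E1]] [s2 [H2 E2]].
  exists (fun v => if odd v then s2 v./2 else s1 v./2); split; last by rewrite /= E1.
  rewrite /ppI !All_cat !All_map; split; [|split].
  + apply: All_impl H1 => e He; rewrite /ren lhsv_map -He.
    by apply: lhsv_ext; apply: All_forall => p; rewrite odd_double doubleK.
  + apply: All_impl H2 => e He; rewrite /ren (lhsv_map (fun v => v.*2.+1)) -He.
    apply: lhsv_ext; apply: All_forall => p /=; rewrite odd_double /=.
    by rewrite uphalf_double.
  + split=> //; rewrite /lhsv !big_cons big_nil /= addr0 scale1r scaleN1r.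
    by rewrite E1 E2 subrr.
Qed.

Definition Hset (X : Type) (V : lmodType K) (l : seq (seq (X * K))) (x : X) (m : V) :=
  exists s : X -> V, All (fun e => lhsv s e = 0) l /\ s x = m.

Definition cvars (X : eqType) (x : X) (l : seq (seq (X * K))) :=
  x :: flatten (map (map fst) l).

Definition conv (X : eqType) (x : X) (l : seq (seq (X * K))) : seq (seq (nat * K)) :=
  map (ren (fun y => index y (cvars x l))) l.

Lemma conv_iff (X : eqType) (V : lmodType K) (x : X) l (m : V) :
  Hset l x m <-> ppset (conv x l) m.
Proof.
split.
- case=> s [Hs Hm]; exists (fun k => s (nth x (cvars x l) k)); split; last first.
    by rewrite /= Hm.
  rewrite /conv All_map.
  have : forall e, e \in l -> forall p, p \in e -> p.1 \in cvars x l.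
    move=> e el p pe; rewrite /cvars in_cons; apply/orP; right.
    apply/flattenP; exists (map fst e); first by apply/mapP; exists e.
    by apply/mapP; exists p.
  move=> Hmem; apply/All_mem => e el; move/All_mem: Hs => /(_ e el) <-.
  rewrite /ren (lhsv_map (fun y => index y (cvars x l))); apply: lhsv_ext.
  by apply/All_mem => p pe; rewrite nth_index //; apply: Hmem pe.
- case=> s [Hs Hm]; exists (fun y => s (index y (cvars x l))); split.
  + move: Hs; rewrite /conv All_map; apply: All_impl => e.
    by rewrite /ren (lhsv_map (fun y => index y (cvars x l))).
  + by rewrite /= eqxx.
Qed.

End Sys.

Section Comp.
Variables (K : nzRingType) (V : lmodType K) (X : eqType).

Definition eqn := (seq (X * K) * V)%type.
Definition holds (s : X -> V) (e : eqn) := lhsv s e.1 = e.2.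
Definition finsolv (Sys : eqn -> Prop) :=
  forall l, All Sys l -> exists s, All (holds s) l.

Lemma Hset_sub (s1 s2 : X -> V) (l : seq eqn) x :
  All (holds s1) l -> All (holds s2) l -> Hset (map fst l) x (s1 x - s2 x).
Proof.
move=> H1 H2; exists (fun y => s1 y - s2 y); split=> //.
elim: l H1 H2 => //= e l IH [E1 H1] [E2 H2]; split; last exact: IH.
by rewrite lhsvB E1 E2 subrr.
Qed.

Lemma Hset_add (s1 : X -> V) (l : seq eqn) x (h : V) :
  All (holds s1) l -> Hset (map fst l) x h ->
  exists s, All (holds s) l /\ s x = s1 x + h.
Proof.
move=> H1 [s' [H2 <-]]; exists (fun y => s1 y + s' y); split=> //.
elim: l H1 H2 => //= e l IH [E1 H1] [E2 H2]; split; last exact: IH.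
by rewrite /holds lhsvD E1 E2 addr0.
Qed.

Lemma Hset_catl (l l' : seq eqn) x (m : V) :
  Hset (map fst (l ++ l')) x m -> Hset (map fst l) x m.
Proof. by case=> s [H E]; exists s; move: H; rewrite map_cat All_cat => -[]. Qed.

Lemma Hset_catr (l l' : seq eqn) x (m : V) :
  Hset (map fst (l ++ l')) x m -> Hset (map fst l') x m.
Proof. by case=> s [H E]; exists s; move: H; rewrite map_cat All_cat => -[]. Qed.

Lemma one_step (Sys : eqn -> Prop) x :
  DCC V -> finsolv Sys ->
  exists v, forall l, All Sys l -> exists s, All (holds s) l /\ s x = v.
Proof.
move=> dcc fs.
have : exists l0, All Sys l0 /\
    forall l, All Sys l -> forall m : V, Hset (map fst l0) x m -> Hset (map fst l) x m.
  apply: contrapT => Hn.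
  have Hf : forall l0 : seq eqn, exists l : seq eqn, All Sys l0 ->
      All Sys l /\ exists m : V, Hset (map fst l0) x m /\ ~ Hset (map fst l) x m.
    move=> l0; case: (pselect (All Sys l0)) => A0; last by exists [::].
    apply: contrapT => Hn2; apply: Hn; exists l0; split=> // l Al m Hm.
    apply: contrapT => Hm2; apply: Hn2; exists l => _; split=> //; by exists m.
  have [f Hf'] := choice Hf.
  pose L := fix L n := if n is n'.+1 then L n' ++ f (L n') else [::].
  have AL : forall n, All Sys (L n).
    elim=> [|n IH]; first by [].
    change (All Sys (L n ++ f (L n))).
    rewrite All_cat; split=> //; by case: (Hf' _ IH).
  have desc : forall n (m : V), ppset (conv x (map fst (L n.+1))) m ->
      ppset (conv x (map fst (L n))) m.
    move=> n m /(conv_iff x) H; apply/(conv_iff x).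
    apply: (Hset_catl (l' := f (L n))); exact: H.
  have [n Hn'] := dcc (fun n => conv x (map fst (L n))) desc.
  case: (Hf' _ (AL n)) => _ [m [Hm1 Hm2]]; apply: Hm2.
  apply: (Hset_catr (l := L n)); apply/(conv_iff x).
  change (ppset (conv x (map fst (L n.+1))) m); apply: Hn'; exact/(conv_iff x).
case=> l0 [Hl0 min].
have [s0 Hs0] := fs _ Hl0.
exists (s0 x) => l Al.
have [s1 Hs1] := fs (l0 ++ l) (proj2 (All_cat _ _ _) (conj Hl0 Al)).
have Hs1l0 : All (holds s1) l0 by move: Hs1; rewrite All_cat => -[].
have Hd := Hset_sub x Hs0 Hs1l0.
have [s [Hs Hsx]] := Hset_add Hs1 (min _ (proj2 (All_cat _ _ _) (conj Hl0 Al)) _ Hd).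
exists s; split; last by rewrite Hsx addrC subrK.
by move: Hs; rewrite All_cat => -[].
Qed.


Definition SysA (Sys : eqn -> Prop) (A : X * V -> Prop) (e : eqn) :=
  Sys e \/ exists y v, A (y, v) /\ e = ([:: (y, 1)], v).

Definition Pgood (Sys : eqn -> Prop) (A : X * V -> Prop) :=
  (forall y v v', A (y, v) -> A (y, v') -> v = v') /\ finsolv (SysA Sys A).

Lemma holds_assign s y v : holds s ([:: (y, 1)], v) <-> s y = v.
Proof. by rewrite /holds /lhsv big_cons big_nil /= scale1r addr0. Qed.

Lemma filter_split (P Q : eqn -> Prop) l :
  All (fun e => P e \/ Q e) l ->
  All P (filter (fun e => `[< P e >]) l) /\
  (forall s, All (holds s) (filter (fun e => `[< P e >]) l) ->
     (forall e, Q e -> holds s e) -> All (holds s) l).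
Proof.
elim: l => [|e l IH] //= [He /IH [H1 H2]].
case: (pselect (P e)) => Pe.
- rewrite (asboolT Pe) /=; split=> // s [Hs1 Hs2] HQ; split=> //; exact: H2.
- rewrite (asboolF Pe) /=; split=> // s Hs HQ; split; last exact: H2.
  by apply: HQ; case: He.
Qed.

Lemma SysA_mono Sys (A B : X * V -> Prop) e :
  (forall p, A p -> B p) -> SysA Sys A e -> SysA Sys B e.
Proof.
move=> AB [H|[y [v [H1 H2]]]]; [by left|right; exists y, v; split=> //; exact: AB].
Qed.

Theorem compactness (Sys : eqn -> Prop) :
  DCC V -> finsolv Sys -> exists s : X -> V, forall e, Sys e -> holds s e.
Proof.
move=> dcc fs.
have [|A [[Afun Afs] Amax]] := @classical_sets.Zorn_bigcup (X * V) (Pgood Sys).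
  move=> F FP Ftot; split.
  - move=> y v v' [A1 FA1 H1] [A2 FA2 H2].
    case: (Ftot _ _ FA1 FA2) => S12.
    + exact: (proj1 (FP _ FA2)) (S12 _ H1) H2.
    + exact: (proj1 (FP _ FA1)) H1 (S12 _ H2).
  - move=> l Hl.
    suff : All Sys l \/ exists A, F A /\ All (SysA Sys A) l.
      case=> [H|[A [FA H]]]; first by apply: fs.
      exact: (proj2 (FP _ FA)).
    elim: l Hl => [|e l IH] /=; first by left.
    case=> He /IH [Hl|[A [FA Hl]]].
    + case: He => [Se|[y [v [[A1 FA1 H1] ->]]]]; first by left.
      right; exists A1; split=> //; split; first by right; exists y, v.
      by apply: All_impl Hl => e' He'; left.
    + right; case: He => [Se|[y [v [[A1 FA1 H1] ->]]]].
        by exists A; split=> //; split=> //; left.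
      case: (Ftot _ _ FA FA1) => S12.
      * exists A1; split=> //; split; first by right; exists y, v.
        by apply: All_impl Hl => e'; apply: SysA_mono.
      * exists A; split=> //; split; last by [].
        by right; exists y, v; split=> //; apply: S12.
have : forall y, exists v, A (y, v).
  move=> y; apply: contrapT => Hy.
  have [v Hv] := one_step y dcc Afs.
  pose B := fun p : X * V => A p \/ p = (y, v).
  apply: (Amax B).
    apply: conj; first by move=> p Ap; left.
    by move=> BA; apply: Hy; exists v; apply: BA; right.
  split.
    move=> z w w' H1 H2.
    case: H1 => [H1|[E1 E2]]; case: H2 => [H2|[E3 E4]]; subst.
    - exact: Afun H1 H2.
    - by case: Hy; exists w.
    - by case: Hy; exists w'.
    - by [].
  move=> l Hl.
  have Hl' : All (fun e => SysA Sys A e \/ e = ([:: (y, 1)], v)) l.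
    apply: All_impl Hl => e [He|[z [w [[Hzw|[-> ->]] ->]]]].
    + by left; left.
    + by left; right; exists z, w.
    + by right.
  have [H1 H2] := filter_split Hl'.
  have [s [Hs Hsy]] := Hv _ H1.
  exists s; apply: H2 => // e ->; exact/holds_assign.
case/choice => s Hs.
exists s => e He.
have HA : All (SysA Sys A) (e :: map (fun p => ([:: (p.1, 1)], s p.1)) e.1).
  split; first by left.
  rewrite All_map; apply: All_forall => p; right; exists p.1, (s p.1); split=> //.
have [s' [He' Hs']] := Afs _ HA.
have Hs2 : All (holds s') (map (fun p => ([:: (p.1, 1)], s p.1)) e.1) := Hs'.
rewrite /holds -He'; apply: lhsv_ext.
by move: Hs2; rewrite All_map; apply: All_impl => p /holds_assign ->.
Qed.

End Comp.

Lemma All_nth T (x0 : T) (P : T -> Prop) l :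
  All P l <-> (forall i, (i < size l)%N -> P (nth x0 l i)).
Proof.
elim: l => [|x l IH] /=; first by split.
rewrite IH; split=> [[Px H] [|i] //= Hi|H]; first exact: H.
by split=> [|i Hi]; [apply: (H 0%N) | apply: (H i.+1)].
Qed.

Lemma sum_ind1 (W : nmodType) n k (F : 'I_n -> W) (Hk : (k < n)%N) :
  \sum_(j < n) (if k == j :> nat then F j else 0) = F (Ordinal Hk).
Proof.
rewrite (bigD1 (Ordinal Hk)) //= eqxx big1 ?addr0 // => j Hj.
case: eqP => // E; case/negP: Hj; apply/eqP; apply: val_inj; by rewrite /= E.
Qed.

Lemma lhsv_cons (K : nzRingType) X (V : lmodType K) (s : X -> V) p e :
  lhsv s (p :: e) = p.2 *: s p.1 + lhsv s e.
Proof. by rewrite /lhsv big_cons. Qed.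

Section Reindex.
Variables (K : nzRingType) (W : lmodType K) (X : eqType).

Definition coef (vars : seq X) (e : seq (X * K)) (j : nat) : K :=
  \sum_(p <- e | index p.1 vars == j) p.2.

Lemma reindex (vars : seq X) (e : seq (X * K)) (w : nat -> W) :
  All (fun p => p.1 \in vars) e ->
  lhsv (fun x => w (index x vars)) e =
  \sum_(j < size vars) coef vars e j *: w j.
Proof.
elim: e => [|p e IH] /=.
  by rewrite /lhsv big_nil big1 // => j _; rewrite /coef big_nil scale0r.
case=> Hp /IH {}IH; rewrite lhsv_cons IH.
have E (j : 'I_(size vars)) : coef vars (p :: e) j *: w j =
    (if index p.1 vars == j :> nat then p.2 *: w j else 0) + coef vars e j *: w j.
  by rewrite /coef big_cons; case: eqP => _; rewrite ?scalerDl ?add0r.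
rewrite (eq_bigr _ (fun j _ => E j)) big_split /=; congr (_ + _).
have Hk : (index p.1 vars < size vars)%N by rewrite index_mem.
by rewrite (sum_ind1 (fun j : 'I_(size vars) => p.2 *: w j) Hk).
Qed.

End Reindex.

Section PureInj.
Variable R : nzRingType.

Lemma mk_linear (U W : lmodType R^c) (h : U -> W) :
  (forall a u v, h (a *: u + v) = a *: h u + h v) ->
  exists h' : {linear U -> W}, forall x, h' x = h x.
Proof.
move=> Hl; pose F := GRing.isLinear.Build R^c U W _ h Hl.
pose h' : {linear U -> W} := HB.pack h F.
by exists h'.
Qed.

Theorem DCC_pure_inj (M : lmodType R^c) : DCC M -> pure_injective M.
Proof.
move=> dcc A B f [finj fpure] g.
pose Sys (e : (seq (B * R^c) * M)%type) :=
  exists a, e.2 = g a /\ lhsv (fun b : B => b) e.1 = f a.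
have fs : finsolv Sys.
  move=> l Hl.
  pose e0 : (seq (B * R^c) * M)%type := ([::], 0).
  pose vars := flatten (map (fun e : (seq (B * R^c) * M)%type => map fst e.1) l).
  have : forall i : 'I_(size l), exists a, (nth e0 l i).2 = g a /\
      lhsv (fun b : B => b) (nth e0 l i).1 = f a.
    by move=> i; move/(All_nth e0): Hl; apply.
  case/choice => a Ha.
  have memv : forall i, (i < size l)%N -> All (fun p => p.1 \in vars) (nth e0 l i).1.
    move=> i Hi; apply/All_mem => p pe; apply/flattenP.
    exists (map fst (nth e0 l i).1); last by apply/mapP; exists p.
    by apply/mapP; exists (nth e0 l i) => //; apply: mem_nth.
  pose r (j : 'I_(size vars)) (i : 'I_(size l)) := coef vars (nth e0 l i).1 j.
  have [y Hy] : exists y : 'I_(size vars) -> A,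
      forall i, \sum_(j < size vars) r j i *: y j = a i.
    apply: fpure; exists (fun j => nth 0 vars j) => i.
    rewrite -(proj2 (Ha i)) -(reindex (fun k => nth 0 vars k)) //; last exact: memv.
    apply: lhsv_ext; apply: All_impl (memv _ (ltn_ord i)) => p Hp.
    by rewrite nth_index.
  pose yn k := if @insub _ _ 'I_(size vars) k is Some j then y j else 0.
  exists (fun b => g (yn (index b vars))).
  apply/(All_nth e0) => i Hi.
  pose i' := Ordinal Hi.
  rewrite /holds (reindex (fun k => g (yn k))); last exact: memv.
  rewrite (proj1 (Ha i')) -(Hy i') linear_sum; apply: eq_bigr => j _.
  by rewrite linearZ /yn valK.
have [s Hs] := compactness dcc fs.
have lin : forall a u v, s (a *: u + v) = a *: s u + s v.
  move=> a u v.
  have HS : Sys ([:: (a *: u + v, 1); (u, - a); (v, -1)], 0).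
    exists 0; rewrite linear0; split=> //.
    rewrite !lhsv_cons /lhsv big_nil /= addr0 scale1r scaleNr scaleN1r linear0.
    by rewrite -opprD subrr.
  have := Hs _ HS.
  rewrite /holds !lhsv_cons /lhsv big_nil /= addr0 scale1r scaleNr scaleN1r.
  by rewrite -opprD => /eqP; rewrite subr_eq0 => /eqP ->.
have [h Hh] := mk_linear lin.
exists h => a; rewrite Hh.
have HS : Sys ([:: (f a, 1)], g a).
  by exists a; split=> //; rewrite lhsv_cons /lhsv big_nil addr0 scale1r.
by move/holds_assign: (Hs _ HS).
Qed.

End PureInj.

Section DSum.
Variable R : nzRingType.

Lemma zero_lin (U W : lmodType R^c) : exists z : {linear U -> W}, forall x, z x = 0.
Proof. by apply: mk_linear => a u v; rewrite scaler0 addr0. Qed.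

Lemma quot_test (V : lmodType R^c) (S : V -> Prop) (Sok : submod S) :
  exists h : {linear V -> QM.quot Sok}, forall x, h x = QM.piq Sok x.
Proof. by exists (QM.piq Sok). Qed.


Lemma lin_choice (U W : lmodType R^c) (J : Type) (F : J -> U -> W) :
  (forall j a u v, F j (a *: u + v) = a *: F j u + F j v) ->
  exists h : J -> {linear U -> W}, forall j x, h j x = F j x.
Proof.
move=> H; have : forall j, exists h : {linear U -> W}, forall x, h x = F j x.
  by move=> j; apply: mk_linear; apply: H.
by case/choice => h Hh; exists h.
Qed.

Theorem DCC_dsum (T M : lmodType R^c) :
  is_direct_sum_of_copies T M -> DCC T -> DCC M.
Proof.
case=> I [iota univ] dccT.
have [pi Hpi] : exists pi : I -> {linear M -> T},
    forall i j x, pi i (iota j x) = if `[< j = i >] then x else 0.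
  have : forall i, exists p : {linear M -> T},
      forall j x, p (iota j x) = if `[< j = i >] then x else 0.
    move=> i.
    have Hl : forall j a (u v : T), (if `[< j = i >] then a *: u + v else 0) =
        a *: (if `[< j = i >] then u else 0) + (if `[< j = i >] then v else 0).
      by move=> j a u v; case: ifP => _ //; rewrite scaler0 addr0.
    have [q Hq] := lin_choice Hl.
    by have [[u Hu] _] := univ T q; exists u => j x; rewrite Hu Hq.
  by case/choice => p Hp; exists p.
pose S (m : M) := exists l : seq {classic I}, uniq l /\
  m = \sum_(i <- l) iota i (pi i m) /\ forall j : {classic I}, j \notin l -> pi j m = 0.
have ext : forall (m : M) (l1 l : seq {classic I}), uniq l1 -> uniq l ->
    m = \sum_(i <- l1) iota i (pi i m) -> (forall j : {classic I}, j \notin l1 -> pi j m = 0) ->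
    {subset l1 <= l} -> \sum_(i <- l) iota i (pi i m) = m.
  move=> m l1 l u1 u Em Hn sub.
  rewrite (bigID (fun i => i \in l1)) /= [X in _ + X]big1 ?addr0; last first.
    by move=> i /Hn ->; rewrite linear0.
  rewrite [RHS]Em -big_filter; apply: perm_big; apply: uniq_perm.
  - exact: filter_uniq.
  - exact: u1.
  - by move=> i; rewrite mem_filter; case E: (i \in l1) => //=; rewrite sub.
have Sok : submod S.
  split; [|split].
  - exists [::]; split=> //; split; first by rewrite big_nil.
    by move=> j _; rewrite linear0.
  - move=> x y [l1 [u1 [E1 N1]]] [l2 [u2 [E2 N2]]].
    exists (undup (l1 ++ l2)); split; first exact: undup_uniq.
    split.
      under eq_bigr => i _ do rewrite !linearB.
      rewrite sumrB.
      have s1 : {subset l1 <= undup (l1 ++ l2)}.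
        by move=> i Hi; rewrite mem_undup mem_cat Hi.
      have s2 : {subset l2 <= undup (l1 ++ l2)}.
        by move=> i Hi; rewrite mem_undup mem_cat Hi orbT.
      by rewrite (ext x l1 _ u1 (undup_uniq _) E1 N1 s1) (ext y l2 _ u2 (undup_uniq _) E2 N2 s2).
    move=> j; rewrite mem_undup mem_cat negb_or => /andP [/N1 H1 /N2 H2].
    by rewrite linearB H1 H2 subrr.
  - move=> a x [l1 [u1 [E1 N1]]]; exists l1; split=> //; split.
      under eq_bigr => i _ do rewrite !linearZ.
      by rewrite -scaler_sumr -E1.
    by move=> j /N1 H; rewrite linearZZ H scaler0.
have Siota : forall j x, S (iota j x).
  move=> j x; exists [:: (j : {classic I})]; split=> //; split.
    by rewrite big_seq1 Hpi (asboolT (erefl j)).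
  move=> j'; rewrite in_cons in_nil orbF => Hj.
  rewrite Hpi asboolF // => E; move: Hj; rewrite E.
  by rewrite eqxx.
have [z Hz] := zero_lin M (QM.quot Sok).
have [z' Hz'] := zero_lin T (QM.quot Sok).
have gen : forall m, S m.
  move=> m; apply/(QM.piq0 Sok).
  have [_ uniq_] := univ _ (fun _ => z').
  rewrite (uniq_ (QM.piq Sok) z) ?Hz // => i x.
  by rewrite Hz; apply/(QM.piq0 Sok).
move=> D desc.
case: (pselect (exists i : I, True)) => [[i0 _]|Hno].
- have descT : forall n (t : T), ppset (D n.+1) t -> ppset (D n) t.
    move=> n t /(pp_lin (iota i0)) /desc /(pp_lin (pi i0)).
    by rewrite Hpi (asboolT (erefl i0)).
  have [n Hn] := dccT D descT.
  exists n => m Hm.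
  have [l [_ [Em _]]] := gen m.
  rewrite Em; apply: pp_sum => i; apply: pp_lin; apply: Hn; exact: pp_lin.
- exists 0%N => m Hm.
  have [l [_ [Em _]]] := gen m.
  rewrite Em; apply: pp_sum => i; case: Hno; by exists i.
Qed.

End DSum.

Section Realize.
Variable R : nzRingType.
Local Notation K := R^c.

Definition coefN (e : seq (nat * K)) (j : nat) : K := \sum_(p <- e | p.1 == j) p.2.

Lemma reindexN (W : lmodType K) n (e : seq (nat * K)) (w : nat -> W) :
  All (fun p => (p.1 < n)%N) e ->
  lhsv w e = \sum_(j < n) coefN e j *: w j.
Proof.
elim: e => [|p e IH] /=.
  by rewrite /lhsv big_nil big1 // => j _; rewrite /coefN big_nil scale0r.
case=> Hp /IH {}IH; rewrite lhsv_cons IH.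
have E (j : 'I_n) : coefN (p :: e) j *: w j =
    (if p.1 == j :> nat then p.2 *: w j else 0) + coefN e j *: w j.
  by rewrite /coefN big_cons; case: eqP => _; rewrite ?scalerDl ?add0r.
rewrite (eq_bigr _ (fun j _ => E j)) big_split /=; congr (_ + _).
by rewrite (sum_ind1 (fun j : 'I_n => p.2 *: w j) Hp).
Qed.

Definition bnd (l : seq (seq (nat * K))) : nat := \max_(e <- l) \max_(p <- e) p.1.

Lemma bnd_ok l : All (fun e => All (fun p => (p.1 < (bnd l).+1)%N) e) l.
Proof.
apply/All_mem => e el; apply/All_mem => p pe; rewrite ltnS /bnd.
apply: (leq_trans _ (leq_bigmax_seq _ el _)) => //.
exact: (leq_bigmax_seq _ pe).
Qed.

Section OneSys.
Variable l : seq (seq (nat * K)).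
Let n := (bnd l).+1.
Let k := size l.
Definition Amx : 'M[K]_(k, n) := \matrix_(i, j) coefN (nth [::] l i) j.

Definition Srel (v : 'rV[K]_n) := exists u : 'rV[K]_k, v = u *m Amx.

Lemma Srel_ok : submod Srel.
Proof.
split; [|split].
- by exists 0; rewrite mul0mx.
- by move=> x y [u1 ->] [u2 ->]; exists (u1 - u2); rewrite mulmxBl.
- by move=> a x [u ->]; exists (a *: u); rewrite scalemxAl.
Qed.

Definition Fmod := QM.quot Srel_ok.
Definition Fp : {linear 'rV[K]_n -> Fmod} := QM.piq Srel_ok.
Definition Fu : Fmod := Fp (delta_mx 0 ord0).

Lemma Fmod_fp : fin_presented Fmod.
Proof.
exists k, n, (mulmxr Amx), Fp; split.
- by move=> y; apply: QM.piq_surj.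
- move=> v; rewrite /Fp (QM.piq0 Srel_ok v); split; case=> u ->; by exists u.
Qed.


Lemma bnd_nth i : (i < k)%N -> All (fun p => (p.1 < n)%N) (nth [::] l i).
Proof. by move=> Hi; move/(All_nth [::]): (bnd_ok l); apply. Qed.

Lemma realize (M : lmodType K) (m : M) :
  ppset l m <-> exists h : {linear Fmod -> M}, h Fu = m.
Proof.
split.
- case=> s [Hs Hm].
  pose L (v : 'rV[K]_n) := \sum_(j < n) v 0 j *: s j.
  have Llin : forall a u v, L (a *: u + v) = a *: L u + L v.
    move=> a u v; rewrite /L scaler_sumr -big_split; apply: eq_bigr => j _.
    by rewrite !mxE scalerDl scalerA.
  have [L' HL'] := mk_linear Llin.
  have Lz : forall v, Srel v -> L' v = 0.
    move=> v [u ->]; rewrite HL' /L.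
    under eq_bigr => j _ do rewrite mxE scaler_suml.
    rewrite exchange_big /= big1 // => e _.
    have He := proj1 (All_nth [::] _ _) Hs e (ltn_ord e).
    rewrite /= (reindexN _ (bnd_nth (ltn_ord e))) in He.
    transitivity (u 0 e *: \sum_(j < n) coefN (nth [::] l e) j *: s j); last first.
      by rewrite He scaler0.
    rewrite scaler_sumr; apply: eq_bigr => j _; by rewrite scalerA mxE.
  have [h Hh] := QM.piq_lift Srel_ok Lz.
  exists h; rewrite /Fu /Fp Hh HL' /L (bigD1 ord0) //= big1 ?addr0.
    by rewrite mxE eqxx /= scale1r.
  by move=> j Hj; rewrite mxE /= (negbTE Hj) scale0r.
- case=> h <-.
  exists (fun j => h (Fp (delta_mx 0 (inord j)))); split; last first.
    by congr (h (Fp (delta_mx 0 _))); apply: val_inj; rewrite /= inordK.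
  apply/(All_nth [::]) => i Hi.
  rewrite (reindexN _ (bnd_nth Hi)).
  have -> : \sum_(j < n) coefN (nth [::] l i) j *: h (Fp (delta_mx 0 (inord j))) =
      h (Fp (row (Ordinal Hi) Amx)).
    rewrite [row _ _]row_sum_delta !linear_sum; apply: eq_bigr => j _.
    by rewrite !linearZZ !mxE inord_val.
  have HS : Srel (row (Ordinal Hi) Amx) by exists (delta_mx 0 (Ordinal Hi)); rewrite rowE.
  have -> : Fp (row (Ordinal Hi) Amx) = 0 by apply/(QM.piq0 Srel_ok).
  by rewrite linear0.
Qed.

End OneSys.
End Realize.

Module DP.
Section DProd.
Variables (K : pzRingType) (I : Type) (Mi : I -> lmodType K).
Definition dprod := forall j, Mi j.
HB.instance Definition _ := gen_eqMixin dprod.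
HB.instance Definition _ := gen_choiceMixin dprod.
Definition dzero : dprod := fun j => 0.
Definition dadd (x y : dprod) : dprod := fun j => x j + y j.
Definition dopp (x : dprod) : dprod := fun j => - x j.
Definition dscl (a : K) (x : dprod) : dprod := fun j => a *: x j.
Lemma daddA : associative dadd.
Proof. by move=> x y z; apply: functional_extensionality_dep => j; rewrite /dadd addrA. Qed.
Lemma daddC : commutative dadd.
Proof. by move=> x y; apply: functional_extensionality_dep => j; rewrite /dadd addrC. Qed.
Lemma dadd0 : left_id dzero dadd.
Proof. by move=> x; apply: functional_extensionality_dep => j; rewrite /dadd add0r. Qed.
Lemma daddN : left_inverse dzero dopp dadd.
Proof. by move=> x; apply: functional_extensionality_dep => j; rewrite /dadd addNr. Qed.
HB.instance Definition _ := GRing.isZmodule.Build dprod daddA daddC dadd0 daddN.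
Lemma dsclA a b v : dscl a (dscl b v) = dscl (a * b) v.
Proof. by apply: functional_extensionality_dep => j; rewrite /dscl scalerA. Qed.
Lemma dscl1 : left_id 1 dscl.
Proof. by move=> v; apply: functional_extensionality_dep => j; rewrite /dscl scale1r. Qed.
Lemma dsclDr : right_distributive dscl dadd.
Proof. by move=> a u v; apply: functional_extensionality_dep => j; rewrite /dscl /dadd scalerDr. Qed.
Lemma dsclDl v : {morph dscl^~ v : a b / a + b >-> dadd a b}.
Proof. by move=> a b; apply: functional_extensionality_dep => j; rewrite /dscl /dadd scalerDl. Qed.
HB.instance Definition _ := GRing.Zmodule_isLmodule.Build K dprod dsclA dscl1 dsclDr dsclDl.
Lemma dprodE (x y : dprod) a j : (a *: x + y) j = a *: x j + y j.
Proof. by []. Qed.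
Lemma dprodB (x y : dprod) j : (x - y) j = x j - y j.
Proof. by []. Qed.
Lemma dprodZ (x : dprod) a j : (a *: x) j = a *: x j.
Proof. by []. Qed.
Lemma dprod0 j : (0 : dprod) j = 0.
Proof. by []. Qed.
End DProd.
End DP.
Import DP.

Section DLim.
Variable R : nzRingType.
Variables (I : Type) (le : I -> I -> Prop) (Mi : I -> lmodType R^c)
  (f : forall i j, le i j -> {linear Mi i -> Mi j}) (T : lmodType R^c)
  (g : forall i, {linear Mi i -> T}).
Hypothesis dir : directed le.
Hypothesis ds : direct_system f.
Hypothesis dl : is_direct_limit f g.

Lemma le_refl i : le i i. Proof. by case: dir => _ []. Qed.
Lemma le_trans i j k : le i j -> le j k -> le i k.
Proof. by case: dir => _ [_ [H _]]; apply: H. Qed.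
Lemma le_ub i j : exists k, le i k /\ le j k.
Proof. by case: dir => _ [_ [_ H]]; apply: H. Qed.

Lemma ub_seq (s : seq I) : exists i, All (fun j => le j i) s.
Proof.
elim: s => [|j s [i Hi]] /=.
  by case: dir => -[i _] _; exists i.
have [k [jk ik]] := le_ub j i; exists k; split=> //.
by apply: All_impl Hi => j' H; apply: le_trans H ik.
Qed.

Lemma f_indep i j (h1 h2 : le i j) x : f h1 x = f h2 x.
Proof.
case: ds => Hid Hcomp.
by rewrite -(Hcomp i j j h1 (le_refl j) h2 x) Hid.
Qed.

Lemma f_comp i j k (h1 : le i j) (h2 : le j k) (h3 : le i k) x :
  f h2 (f h1 x) = f h3 x.
Proof. by case: ds => _; apply. Qed.

Lemma g_f i j (h : le i j) x : g j (f h x) = g i x.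
Proof. by case: dl => H _; apply: H. Qed.

Lemma dl_surj (t : T) : exists i (m : Mi i), g i m = t.
Proof.
pose S (t : T) := exists i (m : Mi i), g i m = t.
have Sok : submod S.
  split; [|split].
  - by case: dir => -[i _] _; exists i, 0; rewrite linear0.
  - move=> x y [i1 [m1 <-]] [i2 [m2 <-]].
    have [k [h1 h2]] := le_ub i1 i2.
    by exists k, (f h1 m1 - f h2 m2); rewrite linearB !g_f.
  - by move=> a x [i [m <-]]; exists i, (a *: m); rewrite linearZZ.
pose q i : {linear Mi i -> QM.quot Sok} := proj1_sig (cid (zero_lin (Mi i) (QM.quot Sok))).
have Hq : forall i x, q i x = 0 by move=> i x; exact: (proj2_sig (cid (zero_lin (Mi i) (QM.quot Sok)))).
have [z Hz] := zero_lin T (QM.quot Sok).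
case: dl => _ /(_ _ q) [].
  by move=> i j h x; rewrite !Hq.
move=> _ uniq_; apply/(QM.piq0 Sok).
have H1 : forall i x, QM.piq Sok (g i x) = q i x.
  by move=> i x; rewrite Hq; apply/(QM.piq0 Sok); exists i, x.
have H2 : forall i x, z (g i x) = q i x by move=> i x; rewrite Hq Hz.
by rewrite (uniq_ (QM.piq Sok) z H1 H2 t) Hz.
Qed.


Lemma dl_ker i (m : Mi i) : g i m = 0 -> exists j (h : le i j), f h m = 0.
Proof.
move=> gm0.
pose germ (i : I) (m : Mi i) : DP.dprod Mi :=
  fun j => match pselect (le i j) with left h => f h m | right _ => 0 end.
have germ_lin : forall i a u v, germ i (a *: u + v) = a *: germ i u + germ i v.
  move=> i' a u v; apply: functional_extensionality_dep => j.
  rewrite DP.dprodE /germ; case: pselect => h; first by rewrite linearP.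
  by rewrite scaler0 addr0.
pose Gl i : {linear Mi i -> DP.dprod Mi} := proj1_sig (cid (mk_linear (germ_lin i))).
have HGl : forall i x, Gl i x = germ i x.
  by move=> i' x; exact: (proj2_sig (cid (mk_linear (germ_lin i')))).
pose Z (x : DP.dprod Mi) := exists j0, forall j, le j0 j -> x j = 0.
have Zok : submod Z.
  split; [|split].
  - by case: dir => -[j0 _] _; exists j0 => j _; rewrite DP.dprod0.
  - move=> x y [j1 H1] [j2 H2]; have [k [h1 h2]] := le_ub j1 j2.
    exists k => j hj; rewrite DP.dprodB H1 ?H2 ?subrr //; exact: le_trans hj.
  - by move=> a x [j0 H]; exists j0 => j hj; rewrite DP.dprodZ H // scaler0.
have qlin : forall i a u v,
    QM.piq Zok (Gl i (a *: u + v)) = a *: QM.piq Zok (Gl i u) + QM.piq Zok (Gl i v).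
  by move=> i' a u v; rewrite !linearP.
pose q i : {linear Mi i -> QM.quot Zok} := proj1_sig (cid (mk_linear (qlin i))).
have Hq : forall i x, q i x = QM.piq Zok (Gl i x).
  by move=> i' x; exact: (proj2_sig (cid (mk_linear (qlin i')))).
have coc : forall i j (h : le i j) x, q j (f h x) = q i x.
  move=> i1 j h x; rewrite !Hq; apply/eqP; rewrite -subr_eq0 -linearB.
  apply/eqP/(QM.piq0 Zok); exists j => k hk.
  rewrite DP.dprodB !HGl /germ.
  case: pselect => [h1|]; last by move/(_ hk).
  case: pselect => [h2|]; last by move/(_ (le_trans h hk)).
  by rewrite (f_comp h h1 h2) subrr.
case: dl => _ /(_ _ q coc) [[u Hu] _].
have : q i m = 0 by rewrite -Hu gm0 linear0.
rewrite Hq => /(QM.piq0 Zok) [j0 Hj0].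
have [k [h1 h2]] := le_ub i j0.
exists k, h1; move: (Hj0 k h2); rewrite HGl /germ.
case: pselect => [h|]; last by move/(_ h1).
by rewrite (f_indep h h1).
Qed.

End DLim.

Lemma All_iota (P : nat -> Prop) n : All P (iota 0 n) -> forall j, (j < n)%N -> P j.
Proof.
move/(All_nth 0%N) => H j Hj; have := H j; rewrite size_iota nth_iota //.
by rewrite add0n; apply.
Qed.

Section DLpp.
Variable R : nzRingType.
Variables (I : Type) (le : I -> I -> Prop) (Mi : I -> lmodType R^c)
  (f : forall i j, le i j -> {linear Mi i -> Mi j}) (T : lmodType R^c)
  (g : forall i, {linear Mi i -> T}).
Hypothesis dir : directed le.
Hypothesis ds : direct_system f.
Hypothesis dl : is_direct_limit f g.

Lemma dl_pp (l : seq (seq (nat * R^c))) (t : T) :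
  ppset l t -> exists i (m : Mi i), ppset l m /\ g i m = t.
Proof.
case=> s [Hs Hst].
have : forall j : nat, exists p : {i : I & Mi i}, g (tag p) (tagged p) = s j.
  by move=> j; have [i [m Hm]] := dl_surj dir dl (s j); exists (Tagged Mi m).
case/choice => P HP.
pose n := (bnd l).+1.
have [i0 Hi0] := ub_seq dir (map (fun j => tag (P j)) (iota 0 n)).
have Hle : forall j, (j < n)%N -> le (tag (P j)) i0.
  by apply: All_iota; move: Hi0; rewrite All_map.
pose m' j := match pselect (le (tag (P j)) i0) with
  | left h => f h (tagged (P j)) | right _ => 0 end.
have Hm' : forall j, (j < n)%N -> g i0 (m' j) = s j.
  move=> j Hj; rewrite /m'; case: pselect => [h|]; last by move/(_ (Hle j Hj)).
  by rewrite (g_f dl) HP.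
have Hl := bnd_ok l.
have He : forall q, (q < size l)%N -> g i0 (lhsv m' (nth [::] l q)) = 0.
  move=> q Hq; rewrite -lhsv_lin -(proj1 (All_nth [::] _ _) Hs q Hq).
  apply: lhsv_ext; apply: All_impl (proj1 (All_nth [::] _ _) Hl q Hq) => p Hp.
  exact: Hm'.
have : forall q, exists j, le i0 j /\ ((q < size l)%N ->
    forall h : le i0 j, f h (lhsv m' (nth [::] l q)) = 0).
  move=> q; case: (ltnP q (size l)) => Hq; last first.
    by exists i0; split; [apply: (le_refl dir) | by []].
  have [j [h Hj]] := dl_ker dir ds dl (He q Hq).
  by exists j; split=> // _ h'; rewrite (f_indep dir ds h' h).
case/choice => J HJ.
have [i1 Hi1] := ub_seq dir (i0 :: map J (iota 0 (size l))).
have h01 : le i0 i1 := proj1 Hi1.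
have HJ1' : All (fun j => le j i1) (map J (iota 0 (size l))) := proj2 Hi1.
move: HJ1'; rewrite All_map => /All_iota HJ1.
exists i1, (f h01 (m' 0%N)); split.
  exists (fun j => f h01 (m' j)); split=> //.
  apply/(All_nth [::]) => q Hq; rewrite lhsv_lin.
  have [h0J HJq] := HJ q.
  by rewrite -(f_comp ds h0J (HJ1 q Hq) h01) HJq // linear0.
by rewrite (g_f dl) Hm' // Hst.
Qed.

End DLpp.

Section Chain.
Variable R : nzRingType.
Variables (Cs : nat -> lmodType R^c) (step : forall n, {linear Cs n -> Cs n.+1}).

Fixpoint cc n d : {linear Cs n -> Cs (d + n)%N} :=
  match d with
  | 0 => (idfun : {linear Cs n -> Cs n})
  | d'.+1 => (step (d' + n) \o cc n d' : {linear Cs n -> Cs (d' + n).+1})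
  end.

Definition chain n m (h : (n <= m)%N) : {linear Cs n -> Cs m} :=
  eq_rect _ (fun k => {linear Cs n -> Cs k}) (cc n (m - n)) m (subnK h).

Lemma chainE n d (h : (n <= d + n)%N) x : chain h x = cc n d x.
Proof.
rewrite /chain; move: (subnK h); have := addnK n d.
move: (d + n - n)%N => d' Hd'; subst d' => E.
by rewrite (eq_irrelevance E erefl).
Qed.

Lemma chain_id n (h : (n <= n)%N) x : chain h x = x.
Proof. exact: (chainE (d := 0) h x). Qed.

Lemma chain_S n m (h : (n <= m.+1)%N) (h' : (n <= m)%N) x :
  chain h x = step m (chain h' x).
Proof.
have [d E] : exists d, m = (d + n)%N by exists (m - n)%N; rewrite subnK.
subst m.
transitivity (cc n d.+1 x); first exact: (chainE (d := d.+1) h x).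
by rewrite (chainE h').
Qed.

Lemma chain_ds : direct_system chain.
Proof.
split; first exact: chain_id.
move=> i j k h1 h2 h3 x; elim: k h2 h3 => [|k IH] h2 h3.
  have E : j = 0%N by apply/eqP; rewrite -leqn0.
  subst j; by rewrite chain_id; congr (chain _ x); apply: eq_irrelevance.
case: (ltngtP j k.+1) => Hjk.
- have h2' : (j <= k)%N by [].
  have h3' : (i <= k)%N by apply: leq_trans h1 h2'.
  by rewrite (chain_S h2 h2') (chain_S h3 h3') IH.
- by exfalso; move: h2; rewrite leqNgt Hjk.
- subst j; rewrite chain_id; congr (chain _ x); apply: eq_irrelevance.
Qed.

End Chain.

Section MainDCC.
Variable R : nzRingType.
Variables (C : lmodType R^c -> Prop) (T : lmodType R^c).
Hypothesis covC : cov_finite_in_fp C.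
Hypothesis limT : in_varinjlim C T.
Hypothesis ML : forall (Cs : nat -> lmodType R^c)
          (c : forall n m, (n <= m)%N -> {linear Cs n -> Cs m}),
     (forall n, C (Cs n)) -> direct_system c -> hom_ML c T.

Theorem DCC_T : DCC T.
Proof.
move=> D desc.
case: limT => I [le [Mi [f [g [dir [CM [ds dl]]]]]]].
case: covC => Cfp pre.
pose psi := fix psi n := if n is n'.+1 then ppI (psi n') (D n) else D 0%N.
have psiS : forall n (N : lmodType R^c) (m : N), ppset (psi n.+1) m -> ppset (psi n) m.
  by move=> n N m /ppI_iff [].
have psiT : forall n (t : T), ppset (psi n) t <-> ppset (D n) t.
  elim=> [|n IH] t; first by [].
  change (ppset (ppI (psi n) (D n.+1)) t <-> ppset (D n.+1) t).
  rewrite ppI_iff IH; split; [by case | move=> H; split=> //; exact: desc].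
pose Fm n := Fmod (psi n).
have Ha : forall n, exists h : {linear Fm n -> Fm n.+1}, h (Fu (psi n)) = Fu (psi n.+1).
  move=> n; apply/(realize (psi n)); apply: psiS; apply/(realize (psi n.+1)).
  by exists (idfun : {linear Fm n.+1 -> Fm n.+1}).
pose a n := proj1_sig (cid (Ha n)).
have Hae : forall n, a n (Fu (psi n)) = Fu (psi n.+1) by move=> n; exact: (proj2_sig (cid (Ha n))).
pose P0 n := cid (pre _ (Fmod_fp (psi n))).
pose Cs n := proj1_sig (P0 n).
pose P1 n := cid (proj2_sig (P0 n)).
pose pn n : {linear Fm n -> Cs n} := proj1_sig (P1 n).
have Hpn : forall n, C (Cs n) /\ forall (C1 : lmodType R^c) (k : {linear Fm n -> C1}), C C1 ->
    exists t : {linear Cs n -> C1}, forall x, t (pn n x) = k x.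
  by move=> n; exact: (proj2_sig (P1 n)).
have Hstep : forall n, exists t : {linear Cs n -> Cs n.+1}, forall x, t (pn n x) = pn n.+1 (a n x).
  move=> n; exact: ((proj2 (Hpn n)) _ (pn n.+1 \o a n : {linear Fm n -> Cs n.+1}) (proj1 (Hpn n.+1))).
pose step n := proj1_sig (cid (Hstep n)).
have Hst : forall n x, step n (pn n x) = pn n.+1 (a n x).
  by move=> n; exact: (proj2_sig (cid (Hstep n))).
have HML := ML (fun n => proj1 (Hpn n)) (chain_ds step).
pose e n := pn n (Fu (psi n)).
have He : forall n (h : (0 <= n)%N), chain step h (e 0%N) = e n.
  elim=> [|n IH] h; first by rewrite chain_id.
  by rewrite (chain_S step h (leq0n n)) IH /e Hst Hae.
have [mm [h0m Hmm]] := HML 0%N.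
exists mm => t Ht.
have Ht' := proj2 (psiT mm t) Ht.
have [i [m [Hm Hgm]]] := dl_pp dir ds dl Ht'.
have [h Hh] := proj1 (realize _ _) Hm.
have [tt Htt] := (proj2 (Hpn mm)) _ h (CM i).
pose phi : {linear Cs mm -> T} := g i \o tt.
pose psi0 : {linear Cs 0%N -> T} := phi \o chain step h0m.
have RHS : exists phi0 : {linear Cs mm -> T}, forall x, psi0 x = phi0 (chain step h0m x).
  by exists phi.
have [phi' Hphi'] := proj2 (Hmm mm.+1 (leq0n _) (leqnSn mm) psi0) RHS.
apply/(psiT mm.+1 t); apply/(realize (psi mm.+1)).
exists (phi' \o pn mm.+1 : {linear Fm mm.+1 -> T}) => /=.
rewrite -/(e mm.+1) -(He mm.+1 (leq0n _)) -Hphi' /psi0 /phi /= He /e Htt Hh.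
exact: Hgm.
Qed.

End MainDCC.

Unset Implicit Arguments.
Set Strict Implicit.

Theorem lemma5p8 (R : nzRingType) (C : lmodType R^c -> Prop) (T : lmodType R^c) :
  cov_finite_in_fp C ->
  in_varinjlim C T ->
  (forall (Cs : nat -> lmodType R^c)
          (c : forall n m, (n <= m)%N -> {linear Cs n -> Cs m}),
     (forall n, C (Cs n)) ->
     direct_system c ->
     hom_ML c T) ->
  sigma_pure_injective T.
Proof.
move=> cov lim ML M HM.
apply: DCC_pure_inj; apply: (DCC_dsum HM).
exact: (DCC_T cov lim ML).
Qed.
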